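(* Let $G$ be an undirected graph and let $W$ be any walk in $G$. Then there exists a walk in $G$ that traverses exactly the same set of edges as $W$ and traverses each of these edges at most twice.
   Context: A walk is a sequence of vertices $v_0,\dots,v_t$ with consecutive vertices adjacent; it traverses the edges $\{v_{j-1},v_j\}$. *)

(* Defs.v *)
From mathcomp Require Import all_boot.
Set Implicit Arguments. Unset Strict Implicit. Unset Printing Implicit Defensive.

(* An undirected graph on vertex type T is a symmetric relation e : rel T
   (edges are unordered pairs {x,y} with e x y).  A walk v_0,...,v_t is
   represented as the nonempty sequence v_0 :: vs with path e v_0 vs. *)
Definition is_walk (T : eqType) (e : rel T) (v0 : T) (vs : seq T) : bool :=
  path e v0 vs.

Definition walk_steps (T : eqType) (v0 : T) (vs : seq T) : seq (T * T) :=
  zip (v0 :: vs) vs.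

Definition edge_mult (T : eqType) (v0 : T) (vs : seq T) (x y : T) : nat :=
  count (fun p => (p == (x, y)) || (p == (y, x))) (walk_steps v0 vs).

(* Main.v *)
Require Import Defs.
From mathcomp Require Import all_boot.
From mathcomp Require Import zify.
Set Implicit Arguments. Unset Strict Implicit. Unset Printing Implicit Defensive.

Definition steps (T : eqType) (s : seq T) : seq (T * T) := zip s (behead s).
Definition flp (T : eqType) (p : T * T) := (p.2, p.1).
Definition pr (T : eqType) (x y : T) := fun p : T * T => (p == (x, y)) || (p == (y, x)).
Definition um (T : eqType) (s : seq T) (x y : T) := count (pr x y) (steps s).
Definition allE (T : eqType) (e : rel T) (s : seq T) := all (fun p => e p.1 p.2) (steps s).

Lemma steps_cons2 (T : eqType) (a b : T) r : steps (a :: b :: r) = (a, b) :: steps (b :: r).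
Proof. by []. Qed.

Lemma stepsC (T : eqType) (s : seq T) z t :
  steps (s ++ z :: t) = steps (rcons s z) ++ steps (z :: t).
Proof.
elim: s => [|a s IH] //; case: s IH => [|b s] IH //.
move: IH; rewrite !cat_cons !rcons_cons !steps_cons2 -cat_cons => ->. by rewrite -cat_cons.
Qed.

Lemma steps_rev (T : eqType) (s : seq T) : steps (rev s) = rev (map (@flp T) (steps s)).
Proof.
elim: s => [|a s IH] //; case: s IH => [|b r] IH //.
rewrite steps_cons2 map_cons [in RHS]rev_cons -IH [in LHS]rev_cons [in LHS]rev_cons.
by rewrite rev_cons -[in LHS]cats1 cat_rcons stepsC cats1.
Qed.

Lemma count_flip (T : eqType) x y (l : seq (T * T)) :
  count (pr x y) (rev (map (@flp T) l)) = count (pr x y) l.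
Proof.
rewrite count_rev count_map; apply: eq_count => -[a b] /=.
by rewrite /pr /flp /= !xpair_eqE (andbC (b == x)) (andbC (b == y)) orbC.
Qed.

Lemma um_sym (T : eqType) (s : seq T) x y : um s x y = um s y x.
Proof. by apply: eq_count => p; rewrite /pr orbC. Qed.

Lemma pr_um (T : eqType) (s : seq T) x y u w : pr x y (u, w) -> um s x y = um s u w.
Proof. by case/orP => /eqP [-> ->] //; rewrite um_sym. Qed.

Lemma path_allE (T : eqType) (e : rel T) a t : path e a t = allE e (a :: t).
Proof.
elim: t a => [|b t IH] a //.
by rewrite /= IH /allE steps_cons2.
Qed.

Lemma allE_rev (T : eqType) (e : rel T) (e_sym : symmetric e) s : allE e (rev s) = allE e s.
Proof.
rewrite /allE steps_rev all_rev all_map; apply: eq_all => -[a b] /=.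
exact: e_sym.
Qed.

Lemma first_occ (T : eqType) (u w : T) s :
  0 < count (pred1 (u, w)) (steps s) ->
  exists P R, s = P ++ u :: w :: R /\ count (pred1 (u, w)) (steps (rcons P u)) = 0.
Proof.
elim: s => [|a s IH] //; case: s IH => [|b t] IH //.
rewrite steps_cons2 /=.
case: eqP => [[-> ->]|Hne] /=.
  by move=> _; exists [::], t.
move=> /IH [P [R [HE H0]]].
exists (a :: P), R; split; first by rewrite HE.
case: P HE H0 => [|c P] /= [Hb HR] H0.
  by subst b; rewrite addn0; case: eqP.
subst b; move: H0 => /= ->; rewrite addn0; by case: eqP.
Qed.

Lemma size_pos (T : eqType) (P : seq T) u X : 0 < size (P ++ u :: X).
Proof. by rewrite size_cat /= addnS. Qed.

Lemma main (T : eqType) (e : rel T) (e_sym : symmetric e) n :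
  forall s : seq T, size s <= n -> 0 < size s -> allE e s ->
  exists s', [/\ 0 < size s', allE e s',
     (forall x y, (0 < um s' x y) = (0 < um s x y))
   & (forall x y, um s' x y <= 2)].
Proof.
elim: n => [|n IH] s.
  by case: s.
move=> Hsz Hpos HE.
have red : forall s' u w, 2 < um s u w -> size s' < size s -> 0 < size s' -> allE e s' ->
    (forall x y, um s x y = um s' x y + pr x y (u, w) + pr x y (u, w)) ->
    exists s'', [/\ 0 < size s'', allE e s'',
     (forall x y, (0 < um s'' x y) = (0 < um s x y))
   & (forall x y, um s'' x y <= 2)].
  move=> s' u w H3 Hlt Hp' HE' Heq.
  have [s'' [H1 H2 H4 H5]] := IH s' (leq_trans Hlt Hsz) Hp' HE'.
  exists s''; split => // x y.
  rewrite H4; have := Heq x y.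
  case Hpr: (pr x y (u, w)) => /=.
    rewrite (pr_um s Hpr) => E; move: H3; rewrite E; lia.
  by rewrite !addn0 => ->.
case: (boolP (has (fun p => 2 < um s p.1 p.2) (steps s))) => [|Hno].
  case/hasP => -[x y] Hin /= H3.
  have [u [w [Hc2 Huw]]] : exists u w, 1 < count (pred1 (u, w)) (steps s) /\ um s u w = um s x y.
    have := count_predUI (pred1 (x, y)) (pred1 (y, x)) (steps s).
    have Eu : count (predU (pred1 (x, y)) (pred1 (y, x))) (steps s) = um s x y by [].
    rewrite Eu => Hc.
    case: (leqP 2 (count (pred1 (x, y)) (steps s))) => Hxy.
      by exists x, y.
    exists y, x; split; last by rewrite um_sym.
    lia.
  rewrite -Huw in H3.
  have [P [R [Hs H0]]] : exists P R, s = P ++ u :: w :: R /\ count (pred1 (u, w)) (steps (rcons P u)) = 0.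
    by apply: first_occ; lia.
  have Hst : steps s = steps (rcons P u) ++ (u, w) :: steps (w :: R) by rewrite Hs stepsC.
  have : 0 < count (pred1 (u, w)) (steps (w :: R)).
    move: Hc2; rewrite Hst count_cat H0 /= eqxx; lia.
  case/first_occ => P2 [R2 [HR _]].
  case: P2 HR => [|c Q] /= [Hwu HR].
  -
    subst w R.
    pose s' := P ++ u :: R2.
    have Hst' : steps s' = steps (rcons P u) ++ steps (u :: R2) by rewrite /s' stepsC.
    have Hst2 : steps s = steps (rcons P u) ++ (u, u) :: (u, u) :: steps (u :: R2).
      by rewrite Hst !steps_cons2.
    apply: (red s' u u) => //.
    + by rewrite Hs /s' !size_cat /= !addnS ltnS leqW.
    + exact: size_pos.
    + move: HE; rewrite /allE Hst2 Hst' !all_cat /= => /andP [-> /and3P [_ _ ->]].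
      by [].
    + move=> x1 y1; rewrite /um Hst2 Hst' !count_cat /=; lia.
  -
    subst c R.
    pose s' := P ++ u :: rev Q ++ w :: R2.
    pose L := rcons (w :: Q) u.
    have Hst2 : steps s = steps (rcons P u) ++ (u, w) :: steps L ++ (u, w) :: steps (w :: R2).
      rewrite Hst -cat_cons stepsC steps_cons2 //.
    have Hst' : steps s' = steps (rcons P u) ++ steps (rev L) ++ steps (w :: R2).
      rewrite /s' stepsC -cat_cons stepsC /L rev_rcons rev_cons rcons_cons //.
    apply: (red s' u w) => //.
    + rewrite Hs /s' !size_cat /= !size_cat /= size_rev; lia.
    + exact: size_pos.
    + move: HE; rewrite /allE Hst2 Hst' !all_cat /= steps_rev all_rev all_map.
      rewrite all_cat /= => /and3P [-> _ /andP [HL /andP [_ ->]]]; rewrite andbT.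
      move: HL; apply: sub_all => -[a b] /=; by rewrite e_sym.
    + move=> x1 y1; rewrite /um Hst2 Hst' !count_cat /= steps_rev count_flip; rewrite ?count_cat /=; move: (nat_of_bool _) => k; lia.
- exists s; split => // x y.
  rewrite leqNgt; apply/negP => H3.
  have : has (pr x y) (steps s) by rewrite has_count; move: H3; rewrite /um; lia.
  case/hasP => -[a b] Hin Hpr.
  move/hasPn: Hno => /(_ _ Hin) /=.
  by rewrite -(pr_um s Hpr) H3.
Qed.

Theorem lemma3 (T : eqType) (e : rel T) (e_sym : symmetric e)
    (v0 : T) (vs : seq T) :
  is_walk e v0 vs ->
  exists (w0 : T) (ws : seq T),
    [/\ is_walk e w0 ws,
        (forall x y, (0 < edge_mult w0 ws x y) = (0 < edge_mult v0 vs x y))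
      & (forall x y, edge_mult w0 ws x y <= 2)].
Proof.
rewrite /is_walk path_allE => HE.
have [[|w0 ws] [H1 H2 H3 H4]] := main e_sym (leqnn (size (v0 :: vs))) (erefl _) HE => //.
exists w0, ws; split => //.
by rewrite path_allE.
Qed.
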